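(* Let $\lambda_1(\varepsilon),\ldots,\lambda_n(\varepsilon)$ be real functions with $\lambda_k(\varepsilon)=\varepsilon^{L_k}(\widetilde\lambda_k+\mathcal{O}(\varepsilon))$ as $\varepsilon\to0$, for integers $0\le L_1\le\cdots\le L_n$, and let $e_j(\varepsilon)=e_j(\lambda_1(\varepsilon),\ldots,\lambda_n(\varepsilon))=\varepsilon^{L_1+\cdots+L_j}(\widetilde e_j+\mathcal{O}(\varepsilon))$. Set $L_0=-1$ and $L_{n+1}=+\infty$. Suppose that for some $s\ge0$ and $1\le m\le n-s$, \[L_s<L_{s+1}=\cdots=L_{s+m}<L_{s+m+1}.\] Then for $1\le k\le m$, \[\widetilde e_{s+k}=\begin{cases}e_k(\widetilde\lambda_{s+1},\ldots,\widetilde\lambda_{s+m}),& s=0,\\ \widetilde\lambda_1\cdots\widetilde\lambda_s\,e_k(\widetilde\lambda_{s+1},\ldots,\widetilde\lambda_{s+m})=\widetilde e_s\,e_k(\widetilde\lambda_{s+1},\ldots,\widetilde\lambda_{s+m}),& s>0.\end{cases}\] In particular, if $s>1$ and $\widetilde e_s\ne0$, then $e_k(\widetilde\lambda_{s+1},\ldots,\widetilde\lambda_{s+m})=\widetilde e_{s+k}/\widetilde e_s$ for $1\le k\le m$, hence $\widetilde\lambda_{s+1},\ldots,\widetilde\lambda_{s+m}$ are the roots of the polynomial $q(\lambda)=\sum_{j=0}^m(-1)^j\widetilde e_{s+j}\lambda^{m-j}$.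
   Context: The $k$-th elementary symmetric polynomial is $e_k(\mu_1,\ldots,\mu_m)=\sum_{\mathcal{Y}\subset\{1,\ldots,m\},\,\#\mathcal{Y}=k}\prod_{i\in\mathcal{Y}}\mu_i$. The constants $\widetilde e_j$ denote the main-term coefficients of $e_j(\varepsilon)$ as displayed. *)

(* Defs.v *)
From HB Require Import structures.
From mathcomp Require Import all_boot all_order all_algebra.
From mathcomp Require Import reals.
Set Implicit Arguments. Unset Strict Implicit. Unset Printing Implicit Defensive.
Import Order.TTheory GRing.Theory Num.Theory.
Local Open Scope ring_scope.

Definition elsym {R : comPzRingType} (n : nat) (mu : nat -> R) (k : nat) : R :=
  \sum_(Y : {set 'I_n} | #|Y| == k) \prod_(i in Y) mu (val i).+1.

(* f(eps) = eps^L (c + O(eps)) as eps -> 0, i.e. there are C and delta > 0 with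
   |f eps - eps^L c| <= C |eps|^(L+1) for 0 < |eps| < delta. *)
Definition has_expansion {R : realType} (f : R -> R) (L : nat) (c : R) : Prop :=
  exists C delta : R, 0 < delta /\
    forall eps : R, 0 < `|eps| < delta ->
      `|f eps - eps ^+ L * c| <= C * `|eps| ^+ L.+1.

(* Main.v *)
Require Import Defs.
From HB Require Import structures.
From mathcomp Require Import all_boot all_order all_algebra.
From mathcomp Require Import reals.
From mathcomp Require Import ring lra zify.
Import Order.TTheory GRing.Theory Num.Theory.
Local Open Scope ring_scope.
Lemma elsymS (R : comPzRingType) n (mu : nat -> R) k :
  elsym n.+1 mu k.+1 = elsym n mu k.+1 + mu n.+1 * elsym n mu k.
Proof.
rewrite /elsym (bigID (fun Y : {set 'I_n.+1} => ord_max \in Y)) /= addrC.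
have linj : injective (@lift n.+1 ord_max) by exact: lift_inj.
have nomax : forall A : {set 'I_n}, ord_max \notin [set lift ord_max x | x in A].
  move=> A; apply/imsetP => -[x _] /(congr1 (@nat_of_ord _)); rewrite lift_max /=.
  by move=> /eqP; rewrite eqn_leq leqNgt ltn_ord.
have back : forall Y : {set 'I_n.+1}, ord_max \notin Y ->
   [set lift ord_max x | x in [set i | lift ord_max i \in Y]] = Y.
  move=> Y hY; apply/setP => x; apply/imsetP/idP.
    by case=> y; rewrite inE => hy ->.
  move=> hx; case: (unliftP ord_max x) => [j ej|ej]; last by rewrite -ej hx in hY.
  by exists j; rewrite // inE -ej.
congr (_ + _).
- rewrite (reindex_onto (fun A : {set 'I_n} => [set lift ord_max x | x in A])
                       (fun Y => [set i | lift ord_max i \in Y])) /=; last first.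
    by move=> Y /andP[_ hY]; apply: back.
  apply: eq_big => A.
    rewrite card_imset // nomax andbT.
    have -> : [set i | lift ord_max i \in [set lift ord_max x | x in A]] = A.
      by apply/setP => i; rewrite inE mem_imset.
    by rewrite eqxx andbT.
  move=> _; rewrite big_imset /=; last by move=> x y _ _; apply: linj.
  by apply: eq_bigr => i _; rewrite /bump leqNgt ltn_ord add0n.
- rewrite mulr_sumr.
  rewrite (reindex_onto (fun A : {set 'I_n} => ord_max |: [set lift ord_max x | x in A])
                       (fun Y => [set i | lift ord_max i \in Y])) /=; last first.
    move=> Y /andP[_ hY]; apply/setP => x; rewrite in_setU1.
    case: (eqVneq x ord_max) => [->|hx] /=; first by [].
    case: (unliftP ord_max x) hx => [j ->|->]; last by rewrite eqxx.
    by move=> _; rewrite mem_imset // inE.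
  apply: eq_big => A.
    rewrite cardsU1 nomax card_imset // add1n eqSS setU11 andbT.
    have -> : [set i | lift ord_max i \in ord_max |: [set lift ord_max x | x in A]] = A.
      by apply/setP => i; rewrite !inE mem_imset // eq_sym (negbTE (neq_lift _ _)).
    by rewrite eqxx andbT.
  move=> _; rewrite big_setU1 ?nomax //= big_imset /=; last by move=> x y _ _; apply: linj.
  by congr (_ * _); apply: eq_bigr => i _; rewrite /bump leqNgt ltn_ord add0n.
Qed.

Lemma elsym0 (R : comPzRingType) n (mu : nat -> R) : elsym n mu 0 = 1.
Proof.
rewrite /elsym (eq_bigl (pred1 set0)); last by move=> Y; rewrite cards_eq0.
by rewrite big_pred1_eq big_set0.
Qed.

Lemma elsym_gt (R : comPzRingType) n (mu : nat -> R) k : (n < k)%N -> elsym n mu k = 0.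
Proof.
move=> hk; rewrite /elsym big_pred0 // => Y.
apply/negbTE; apply: contraTneq hk => <-.
by rewrite -leqNgt; apply: leq_trans (max_card _) _; rewrite card_ord.
Qed.

Lemma vieta (R : comNzRingType) N (mu : nat -> R) :
  \prod_(i < N) ('X - (mu i.+1)%:P) =
  \sum_(j < N.+1) ((-1) ^+ j * elsym N mu j) *: 'X^(N - j).
Proof.
elim: N => [|N IH].
  by rewrite big_ord0 big_ord1 elsym0 mulr1 expr0 scale1r.
rewrite big_ord_recr /= IH mulrBr.
set S := \sum_(j < N.+1) _.
rewrite [RHS]big_ord_recl /= elsym0 mulr1 expr0 scale1r subn0.
under [X in _ = _ + X]eq_bigr => j _ do rewrite /bump /= add1n elsymS subSS mulrDr scalerDl.
rewrite big_split /= addrA.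
congr (_ + _).
  rewrite /S big_ord_recl /= elsym0 mulr1 expr0 scale1r subn0 mulrDl -exprSr mulr_suml.
  congr (_ + _).
  rewrite [RHS]big_ord_recr /= elsym_gt // mulr0 scale0r addr0.
  apply: eq_bigr => j _; rewrite /bump /= add1n.
  by rewrite -scalerAl -exprSr subnSK.
rewrite /S mulr_suml -sumrN; apply: eq_bigr => j _.
rewrite mulrC mul_polyC scalerA -scaleNr; congr (_ *: _).
by rewrite exprS; ring.
Qed.

Set Implicit Arguments. Unset Strict Implicit.
Definition bigO {R : realType} (f : R -> R) (a : nat) : Prop :=
  exists C delta : R, 0 < delta /\
    forall eps : R, 0 < `|eps| < delta -> `|f eps| <= C * `|eps| ^+ a.

Section An.
Variable R : realType.
Implicit Types f g : R -> R.

Lemma bigO_ext f g a : (forall e, f e = g e) -> bigO f a -> bigO g a.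
Proof. by move=> fg [C [d [d0 H]]]; exists C, d; split=> // e he; rewrite -fg H. Qed.

Lemma bigO_eqn f a b : a = b -> bigO f a -> bigO f b.
Proof. by move=> ->. Qed.

Lemma bigO_add f g a : bigO f a -> bigO g a -> bigO (fun e => f e + g e) a.
Proof.
move=> [C1 [d1 [d10 H1]]] [C2 [d2 [d20 H2]]].
exists (C1 + C2), (Num.min d1 d2); split; first by rewrite lt_min d10 d20.
move=> e /andP[e0]; rewrite lt_min => /andP[e1 e2].
apply: le_trans (ler_normD _ _) _; rewrite mulrDl.
by apply: lerD; [apply: H1 | apply: H2]; rewrite e0.
Qed.

Lemma bigO_neg f a : bigO f a -> bigO (fun e => - f e) a.
Proof. by move=> [C [d [d0 H]]]; exists C, d; split=> // e he; rewrite normrN H. Qed.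

Lemma bigO_mul f g a b : bigO f a -> bigO g b -> bigO (fun e => f e * g e) (a + b).
Proof.
move=> [C1 [d1 [d10 H1]]] [C2 [d2 [d20 H2]]].
exists (C1 * C2), (Num.min d1 d2); split; first by rewrite lt_min d10 d20.
move=> e /andP[e0]; rewrite lt_min => /andP[e1 e2].
rewrite normrM exprD mulrACA; apply: ler_pM => //.
  by apply: H1; rewrite e0.
by apply: H2; rewrite e0.
Qed.

Lemma bigO_weak f a b : (a <= b)%N -> bigO f b -> bigO f a.
Proof.
move=> ab [C [d [d0 H]]].
exists `|C|, (Num.min d 1); split; first by rewrite lt_min d0 ltr01.
move=> e /andP[e0]; rewrite lt_min => /andP[e1 e2].
apply: le_trans (H e _) _; first by rewrite e0.
apply: le_trans (ler_norm _) _; rewrite normrM normrX normr_id.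
apply: ler_wpM2l => //; apply: ler_wiXn2l => //; by [rewrite ltW | rewrite normr_ge0].
Qed.

Lemma bigO_pow (L : nat) (c : R) : bigO (fun e => e ^+ L * c) L.
Proof.
exists `|c|, 1; split=> // e _; by rewrite normrM normrX mulrC.
Qed.

Lemma bigO_0 a : bigO (fun _ : R => 0) a.
Proof. exists 0, 1; split=> // e _; by rewrite normr0 mul0r. Qed.

Lemma exp_bigO f L c : has_expansion f L c -> bigO f L.
Proof.
move=> H.
have H1 : bigO (fun e => f e - e ^+ L * c) L by exact: (bigO_weak (leqnSn L) H).
apply: bigO_ext (bigO_add H1 (bigO_pow L c)) => e; by rewrite subrK.
Qed.

Lemma exp_eq f f' L L' c c' : has_expansion f L c -> L = L' -> c = c' ->
  (forall e, f e = f' e) -> has_expansion f' L' c'.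
Proof.
move=> H <- <- ff'; apply: (bigO_ext _ H) => e /=; by rewrite ff'.
Qed.

Lemma exp_add f g L c d : has_expansion f L c -> has_expansion g L d ->
  has_expansion (fun e => f e + g e) L (c + d).
Proof.
move=> Hf Hg; apply: bigO_ext (bigO_add Hf Hg) => e /=; ring.
Qed.

Lemma exp_mul f g a b c d : has_expansion f a c -> has_expansion g b d ->
  has_expansion (fun e => f e * g e) (a + b) (c * d).
Proof.
move=> Hf Hg.
have H1 := bigO_mul Hf (exp_bigO Hg).
have H2 := bigO_mul (bigO_pow a c) Hg.
rewrite addSn in H1; rewrite addnS in H2.
apply: bigO_ext (bigO_add H1 H2) => e /=; rewrite exprD; ring.
Qed.

Lemma exp_small f L : bigO f L.+1 -> has_expansion f L 0.
Proof. by move=> H; apply: bigO_ext H => e; rewrite mulr0 subr0. Qed.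


Lemma exp_unique f L c d : has_expansion f L c -> has_expansion f L d -> c = d.
Proof.
move=> Hc Hd.
have : bigO (fun e => e ^+ L * (d - c)) L.+1.
  apply: bigO_ext (bigO_add Hc (bigO_neg Hd)) => e /=; ring.
move=> [C [del [del0 H]]].
apply/eqP; rewrite eq_sym -subr_eq0; apply/negPn/negP => hx.
set x := d - c in H hx.
have nx : 0 < `|x| by rewrite normr_gt0.
set t := Num.min (del / 2) (`|x| / (`|C| + 1)).
have Cp : 0 < `|C| + 1 by apply: ltr_wpDl.
have t0 : 0 < t by rewrite lt_min divr_gt0 //= divr_gt0.
have ht := H t.
rewrite gtr0_norm // t0 /= in ht.
have tdel : t < del.
  have : t <= del / 2 by rewrite ge_min lexx.
  lra.
move/(_ tdel): ht; rewrite normrM normrX gtr0_norm // exprS.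
rewrite mulrA [X in _ <= X]mulrC ler_pM2l ?exprn_gt0 //.
have tx : t * (`|C| + 1) <= `|x|.
  by rewrite -ler_pdivlMr // ge_min lexx orbT.
have : C <= `|C| := ler_norm C.
nra.
Qed.

End An.
Unset Implicit Arguments. Set Strict Implicit.

Lemma exp_const (R : realType) (f : R -> R) c : (forall e, f e = c) -> has_expansion f 0 c.
Proof. move=> H; apply: bigO_ext (bigO_0 R 1) => e; by rewrite H expr0 mul1r subrr. Qed.

Lemma exp_zero (R : realType) (f : R -> R) L : (forall e, f e = 0) -> has_expansion f L 0.
Proof. move=> H; apply: bigO_ext (bigO_0 R L.+1) => e; by rewrite H mulr0 subrr. Qed.

Theorem lemma3p4 (R : realType) (n : nat) (lam : nat -> R -> R) (L : nat -> nat)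
  (lt : nat -> R) (et : nat -> R) (s m : nat)
  (hL : forall i j, (1 <= i)%N -> (i <= j)%N -> (j <= n)%N -> (L i <= L j)%N)
  (hlam : forall k, (1 <= k <= n)%N -> has_expansion (lam k) (L k) (lt k))
  (he : forall j, (1 <= j <= n)%N ->
     has_expansion (fun eps => elsym n (fun i => lam i eps) j)
                   (\sum_(1 <= i < j.+1) L i)%N (et j))
  (hm : (1 <= m)%N) (hsm : (m <= n - s)%N)
  (hleft : s = 0%N \/ (L s < L s.+1)%N)
  (hmid : forall i, (1 <= i <= m)%N -> L (s + i)%N = L s.+1)
  (hright : (s + m)%N = n \/ (L (s + m)%N < L (s + m).+1)%N) :
  (forall k, (1 <= k <= m)%N ->
     (s = 0%N -> et (s + k)%N = elsym m (fun i => lt (s + i)%N) k) /\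
     ((0 < s)%N ->
        et (s + k)%N = (\prod_(1 <= i < s.+1) lt i) * elsym m (fun i => lt (s + i)%N) k /\
        (\prod_(1 <= i < s.+1) lt i) * elsym m (fun i => lt (s + i)%N) k
          = et s * elsym m (fun i => lt (s + i)%N) k)) /\
  ((1 < s)%N -> et s != 0 ->
     (forall k, (1 <= k <= m)%N ->
        elsym m (fun i => lt (s + i)%N) k = et (s + k)%N / et s) /\
     \sum_(j < m.+1) ((-1) ^+ j * et (s + j)%N) *: 'X^(m - j)
       = et s *: \prod_(i < m) ('X - (lt (s + i.+1)%N)%:P)).
Proof.
pose E := fun N j (eps : R) => elsym N (fun i => lam i eps) j.
pose S := fun j => (\sum_(1 <= i < j.+1) L i)%N.
have SS : forall j, S j.+1 = (S j + L j.+1)%N by move=> j; rewrite /S big_nat_recr.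
have S0 : S 0%N = 0%N by rewrite /S big_geq.
have E0 : forall N e, E N 0%N e = 1 by move=> N e; rewrite /E elsym0.
have Erec : forall N j e, E N.+1 j.+1 e = E N j.+1 e + lam N.+1 e * E N j e.
  by move=> N j e; rewrite /E elsymS.
have Egt : forall N j e, (N < j)%N -> E N j e = 0 by move=> N j e h; rewrite /E elsym_gt.
have hsmn : (s + m <= n)%N by lia.
have Ebig : forall N, (N <= n)%N -> forall j, (j <= N)%N -> bigO (E N j) (S j).
  elim=> [|N IH] hN j hj.
    move: hj; rewrite leqn0 => /eqP ->; rewrite S0.
    by apply: bigO_ext (bigO_pow 0 (1 : R)) => e; rewrite E0 expr0 mulr1.
  case: j hj => [|j] hj.
    by rewrite S0; apply: bigO_ext (bigO_pow 0 (1 : R)) => e; rewrite E0 expr0 mulr1.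
  apply: bigO_ext (fun e => esym (Erec N j e)) _.
  apply: bigO_add.
    case: (ltnP N j.+1) => hjN.
      by apply: bigO_ext (bigO_0 R _) => e; rewrite Egt.
    by apply: IH => //; lia.
  apply: (@bigO_weak _ _ _ (L N.+1 + S j)%N).
    rewrite SS; have h : (L j.+1 <= L N.+1)%N by apply: hL.
    lia.
  apply: bigO_mul; first by apply: exp_bigO (hlam _ _); lia.
  by apply: IH => //; lia.
have Phase1 : forall N, (N <= n)%N ->
    has_expansion (E N N) (S N) (\prod_(1 <= i < N.+1) lt i).
  elim=> [|N IH] hN.
    by rewrite S0 big_geq //; apply: exp_const => e; rewrite E0.
  have hl : (1 <= N.+1 <= n)%N by lia.
  have hN' : (N <= n)%N by lia.
  apply: exp_eq (exp_mul (hlam N.+1 hl) (IH hN')) _ _ _.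
  - by rewrite SS addnC.
  - by rewrite [RHS]big_nat_recr //= mulrC.
  - by move=> e; rewrite Erec (Egt N N.+1) // add0r.
pose P := \prod_(1 <= i < s.+1) lt i.
pose lt' := fun i => lt (s + i)%N.
have Phase2 : forall N, (N <= m)%N -> forall k, (k <= m)%N ->
    has_expansion (E (s + N)%N (s + k)%N) (S (s + k)%N) (P * elsym N lt' k).
  elim=> [|N IH] hN k hk.
    case: k hk => [|k] hk.
      rewrite !addn0 elsym0 mulr1; apply: Phase1; lia.
    rewrite elsym_gt // mulr0; apply: exp_zero => e; rewrite Egt //; lia.
  case: k hk => [|k] hk.
    rewrite addn0 elsym0 mulr1.
    have IH0 := IH (ltnW hN) 0%N (leq0n _); rewrite addn0 elsym0 mulr1 in IH0.
    have [s0|s0] := eqVneq s 0%N.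
      rewrite /P s0 S0 big_geq //; apply: exp_const => e; by rewrite E0.
    have [s' es] : exists s', s = s'.+1 by case: (s) s0 => [|s'']; [rewrite eqxx | exists s''].
    have Lss : (L s < L s.+1)%N by case: hleft => //; move/eqP; rewrite (negbTE s0).
    have hmN := hmid N.+1; rewrite addnS in hmN.
    subst s.
    have B : bigO (fun e => lam (s'.+1 + N).+1 e * E (s'.+1 + N)%N s' e) (S s'.+1).+1.
      apply: (@bigO_weak _ _ _ (L (s'.+1 + N).+1 + S s')%N).
        rewrite SS hmN; last by lia.
        lia.
      apply: bigO_mul; first by apply: exp_bigO (hlam _ _); lia.
      by apply: Ebig; lia.
    apply: exp_eq (exp_add IH0 (exp_small B)) _ _ _ => //.
    - by rewrite addr0.
    - by move=> e; rewrite addnS Erec.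
  have IH1 := IH (ltnW hN) k.+1 hk.
  have IH2 := IH (ltnW hN) k (ltnW hk).
  have hmk := hmid k.+1; rewrite addnS in hmk.
  have hmN := hmid N.+1; rewrite addnS in hmN.
  have M := exp_mul (hlam (s + N).+1 ltac:(lia)) IH2.
  apply: exp_eq (exp_add IH1 (exp_eq M _ _ (fun e => erefl))) _ _ _ => //.
  - rewrite addnS SS hmk ?hmN; lia.
  - by rewrite elsymS /lt' addnS; ring.
  - by move=> e; rewrite !addnS Erec.
have Phase3 : forall d, (s + m + d <= n)%N -> forall j c, (j <= s + m)%N ->
    has_expansion (E (s + m)%N j) (S j) c -> has_expansion (E (s + m + d)%N j) (S j) c.
  elim=> [|d IH] hd j c hj H; first by rewrite addn0.
  rewrite addnS.
  case: j hj H => [|j] hj H.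
    by apply: exp_eq H _ _ _ => // e; rewrite !E0.
  have hr : (L (s + m) < L (s + m).+1)%N by case: hright => // h; lia.
  have B : bigO (fun e => lam (s + m + d).+1 e * E (s + m + d)%N j e) (S j.+1).+1.
    apply: (@bigO_weak _ _ _ (L (s + m + d).+1 + S j)%N).
      rewrite SS.
      have h1 : (L j.+1 <= L (s + m))%N by apply: hL => //; lia.
      have h2 : (L (s + m).+1 <= L (s + m + d).+1)%N by apply: hL => //; lia.
      lia.
    apply: bigO_mul; first by apply: exp_bigO (hlam _ _); lia.
    by apply: Ebig; lia.
  apply: exp_eq (exp_add (IH _ j.+1 c hj H) (exp_small B)) _ _ _.
  - lia.
  - by [].
  - by rewrite addr0.
  - by move=> e; rewrite Erec.
have key : forall k, (k <= m)%N -> (1 <= s + k)%N -> et (s + k)%N = P * elsym m lt' k.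
  move=> k hk h1.
  apply: (exp_unique (he (s + k)%N _)); first by lia.
  have := Phase3 (n - (s + m))%N _ (s + k)%N _ _ (Phase2 m (leqnn _) k hk).
  rewrite subnKC //; apply; lia.
have etsP : (0 < s)%N -> et s = P.
  move=> s0; have := key 0%N (leq0n _); rewrite addn0 elsym0 mulr1; apply; lia.
split.
  move=> k /andP[k1 km]; split.
    move=> s0; rewrite key //; last by lia.
    have -> : P = 1 by rewrite /P s0 big_geq.
    by rewrite mul1r.
  move=> s0; rewrite key //; last by lia.
  by rewrite etsP.
move=> s1 ets0.
have s0 : (0 < s)%N by lia.
split.
  move=> k /andP[k1 km]; rewrite key //; last by lia.
  rewrite etsP // in ets0 *; by rewrite [P * _]mulrC mulfK.
rewrite (vieta _ m (fun i => lt (s + i)%N)) scaler_sumr; apply: eq_bigr => j _.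
rewrite scalerA key; last by lia.
  by rewrite etsP //; congr (_ *: _); rewrite /lt'; ring.
by rewrite -ltnS.
Qed.
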